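(* Let $K$ be a field, $\mathcal A$ a $K$-algebra and $V$ a $K$-subspace of $\mathcal A$. Then the following two statements are equivalent: (1) every element of $\sqrt V$ which is algebraic over $K$ is either nilpotent or invertible in $\mathcal A$; (2) $V$ contains no non-trivial idempotent of $\mathcal A$.
   Context: All algebras are associative with identity $1$ (not necessarily commutative). For a subset $S\subseteq\mathcal A$, the radical $\sqrt S$ is the set of $a\in\mathcal A$ such that $a^m\in S$ for all sufficiently large $m$. An idempotent is an element $e$ with $e^2=e$; it is non-trivial if $e\neq 0$ and $e\neq 1$. *)

(* Defs.v *)
From mathcomp Require Import all_boot all_algebra.
Set Implicit Arguments. Unset Strict Implicit. Unset Printing Implicit Defensive.
Import GRing.Theory.
Local Open Scope ring_scope.

Definition radical (R : nzRingType) (S : {pred R}) : R -> Prop :=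
  fun a => exists N : nat, forall m : nat, (N <= m)%N -> a ^+ m \in S.

Definition algebraic_over (K : fieldType) (A : algType K) (a : A) : Prop :=
  exists p : {poly K}, p != 0 /\ horner_alg a p = 0.

Definition is_nilpotent (R : nzRingType) (a : R) : Prop :=
  exists n : nat, a ^+ n = 0.

Definition is_invertible (R : nzRingType) (a : R) : Prop :=
  exists b : R, a * b = 1 /\ b * a = 1.

Definition nontrivial_idempotent (R : nzRingType) (e : R) : Prop :=
  e * e = e /\ e != 0 /\ e != 1.

(* Main.v *)
Require Import Defs.
From mathcomp Require Import all_boot all_algebra.
Import GRing.Theory.
Local Open Scope ring_scope.

Section H.
Variables (K : fieldType) (A : algType K) (a : A).
Lemma haM r s : horner_alg a (r * s) = horner_alg a r * horner_alg a s.
Proof. exact: rmorphM. Qed.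
Lemma haD r s : horner_alg a (r + s) = horner_alg a r + horner_alg a s.
Proof. exact: rmorphD. Qed.
Lemma haB r s : horner_alg a (r - s) = horner_alg a r - horner_alg a s.
Proof. exact: rmorphB. Qed.
Lemma haXn r n : horner_alg a (r ^+ n) = horner_alg a r ^+ n.
Proof. exact: rmorphXn. Qed.
Lemma ha1 : horner_alg a 1 = 1.
Proof. exact: rmorph1. Qed.
Lemma ha0 : horner_alg a 0 = 0.
Proof. exact: rmorph0. Qed.
End H.

Lemma memV_horner (K : fieldType) (A : algType K) (V : {pred A})
    (HV : submod_closed V) (a : A) (N : nat) :
  (forall m, (N <= m)%N -> a ^+ m \in V) ->
  forall r k, (N <= k)%N -> horner_alg a (r * 'X^k) \in V.
Proof.
move=> Ha r; elim/poly_ind: r => [|r c IH] k Hk.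
  by rewrite mul0r ha0; case: HV.
rewrite mulrDl haD addrC.
have -> : horner_alg a (c%:P * 'X^k) = c *: a ^+ k.
  by rewrite haM horner_algC haXn horner_algX -scalerAl mul1r.
rewrite -mulrA -exprS.
case: HV => _ HV; apply: HV; first exact: Ha.
by apply: IH; apply: leqW.
Qed.

Theorem theorem3p5 (K : fieldType) (A : algType K) (V : {pred A})
    (HV : submod_closed V) :
  (forall a : A, radical V a -> algebraic_over a ->
     is_nilpotent a \/ is_invertible a)
  <-> ~ (exists e : A, e \in V /\ nontrivial_idempotent e).
Proof.
split.
  move=> H [e [eV [ee [e0 e1]]]].
  have epow : forall n, e ^+ n.+1 = e.
    by elim=> [|n IH]; rewrite ?expr1 // exprS IH.
  have re : radical V e.
    by exists 1%N => m Hm; rewrite -(prednK Hm) epow.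
  have ae : algebraic_over e.
    exists ('X * ('X - 1%:P)); split.
      by rewrite mulf_neq0 ?polyX_eq0 ?polyXsubC_eq0.
    by rewrite haM haB horner_algX horner_algC scale1r mulrBr mulr1 ee subrr.
  have [nil|[b [eb be]]] := H e re ae.
  - case: nil => [[|n]]; first by move/eqP; rewrite oner_eq0.
    by rewrite epow => /eqP; rewrite (negbTE e0).
  - move/eqP: e1; apply; apply/eqP.
    by rewrite -eb -{2}ee -mulrA eb mulr1.
move=> Hno a [N HN] [p [p0 pa]].
have [n [q /implyP /(_ p0) q0 pE]] := multiplicity_XsubC p 0.
rewrite polyC0 subr0 in pE.
set k := (n + N).+1.
have cop : coprimep q ('X ^+ k).
  by apply: coprimep_expr; rewrite -[X in coprimep _ X]subr0 -polyC0 coprimep_XsubC.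
have [[u v] /= uv] := Bezout_eq1_coprimepP _ _ cop.
have qXk : horner_alg a (q * 'X^k) = 0.
  have -> : k = (n + N.+1)%N by rewrite /k addnS.
  by rewrite exprD mulrA -pE haM pa mul0r.
set e := horner_alg a (v * 'X^k).
have eV : e \in V by apply: (@memV_horner _ _ _ HV a N HN v k); rewrite /k -addSn leq_addl.
have comm : forall r s : {poly K}, horner_alg a r * horner_alg a s = horner_alg a s * horner_alg a r.
  by move=> r s; rewrite -!haM mulrC.
have he1 : horner_alg a (u * q) + e = 1 by rewrite -haD uv ha1.
have ee : e * e = e.
  have : horner_alg a (u * q) * e = 0.
    by rewrite /e -haM mulrACA haM qXk mulr0.
  have he : e = 1 - horner_alg a (u * q) by rewrite -he1 addrAC subrr add0r.
  by move=> h; rewrite {1}he mulrBl mul1r h subr0.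
have [e0|e1] : e = 0 \/ e = 1.
  case: (eqVneq e 0) => [->|e0]; first by left.
  case: (eqVneq e 1) => [->|e1]; first by right.
  by exfalso; apply: Hno; exists e.
- left; exists k.
  have : horner_alg a (u * q) = 1 by rewrite -he1 e0 addr0.
  move=> h; rewrite -[a ^+ k]mulr1 -h -{1}(horner_algX a) -haXn -haM mulrC -mulrA haM qXk mulr0 //=.
- have kE : 'X^k = 'X * 'X^(k.-1) :> {poly K} by rewrite /k exprS.
  right; exists (horner_alg a (v * 'X^(k.-1))); split.
  + by rewrite -e1 /e kE mulrCA [RHS]haM horner_algX.
  + by rewrite -e1 /e kE mulrCA [RHS]haM comm horner_algX.
Qed.
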